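(* Let $U>0$. For an integer $L>\frac{8}{U}$ and real $\Lambda$, let $q_\ell(\Lambda)$, $\ell=1,\dots,L$, denote the unique solution $k\in[(\ell-1)\frac{2\pi}{L},\ell\frac{2\pi}{L}]$ of $\sin k - \Lambda = \frac{U}{4}\cot\left(\frac{kL}{2}\right)$, and for integers $\ell,m$ with $\frac{L}{2}\le m-\ell\le \frac{3L}{2}-1$ let $\xi_{\ell,m}(\Lambda)$ denote the unique positive solution $\xi$ of $$\cos\left(m\frac{\pi}{L} - \frac{q_\ell(\Lambda)}{2}\right)\sinh(\xi) = -\frac{U}{4}\,\frac{\sinh(\xi L)}{\cosh(\xi L) - (-1)^m\cos\left(q_\ell(\Lambda)L/2\right)}.$$ For every integer $L>\frac{8}{U}$ choose integers $\ell_L\in\{1,\dots,L\}$ and $m_L$ with $\frac{L}{2}\le m_L-\ell_L\le\frac{3L}{2}-1$, such that $\lim_{L\to\infty}(m_L-\ell_L)\frac{\pi}{L} = q$ with $\frac{\pi}{2}<q<\frac{3\pi}{2}$. Then $$\lim_{L\to\infty}\xi_{\ell_L,m_L}(\Lambda) = -\operatorname{arsinh}\left(\frac{U}{4\cos(q)}\right)$$ uniformly in $\Lambda\in\mathbb{R}$.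
   Context: This concerns $N=3$ electrons and one down spin on a lattice of length $L$: solutions of the Lieb-Wu equations $e^{ik_jL} = \frac{\Lambda-\sin k_j - iU/4}{\Lambda - \sin k_j + iU/4}$ ($j=1,2,3$), $\prod_j \frac{\Lambda-\sin k_j - iU/4}{\Lambda - \sin k_j + iU/4}=1$, consisting of a $k$-$\Lambda$ two-string $k_{1,2} = q\mp i\xi$ ($\xi>0$) and a real $k_3 = q_\ell(\Lambda)$, where the total momentum condition gives $q = m\frac{\pi}{L} - \frac{q_\ell(\Lambda)}{2}$ and $\xi=\xi_{\ell,m}(\Lambda)$. Under $U>0$, $L>8/U$ and $\frac{L}{2}\le m-\ell\le\frac{3L}{2}-1$ the displayed equation has a unique positive solution for every real $\Lambda$. The result says that these strings are driven to the ideal string positions $\sinh\xi = -U/(4\cos q)$ as $L\to\infty$. *)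

(* Defs.v *)
From Stdlib Require Import Reals Lra ZArith ClassicalEpsilon.
Open Scope R_scope.

Definition cotR (x : R) : R := cos x / sin x.

(* Defining property of q_l(Lambda): k in the l-th interval
   [(l-1) 2pi/L, l 2pi/L] solving  sin k - Lambda = U/4 cot(kL/2).
   (At the endpoints cot(kL/2) is undefined, so solutions lie in the interior.) *)
Definition is_q (U : R) (L l : nat) (Lam k : R) : Prop :=
  (INR l - 1) * (2 * PI / INR L) < k < INR l * (2 * PI / INR L) /\
  sin k - Lam = U / 4 * cotR (k * INR L / 2).

(* q_l(Lambda): "the" solution (chosen by Hilbert epsilon; it is the unique
   one whenever the solution is unique, as in the paper). *)
Definition q_sol (U : R) (L l : nat) (Lam : R) : R :=
  epsilon (inhabits 0) (fun k => is_q U L l Lam k).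

Definition is_xi (U : R) (L l : nat) (m : Z) (Lam xi : R) : Prop :=
  0 < xi /\
  cos (IZR m * PI / INR L - q_sol U L l Lam / 2) * sinh xi =
    - (U / 4) * (sinh (xi * INR L) /
        (cosh (xi * INR L) - powerRZ (-1) m * cos (q_sol U L l Lam * INR L / 2))).

Definition xi_sol (U : R) (L l : nat) (m : Z) (Lam : R) : R :=
  epsilon (inhabits 0) (fun xi => is_xi U L l m Lam xi).

(* Main.v *)
Require Import Defs.
From Stdlib Require Import Reals ZArith.
From Stdlib Require Import Reals Lra ZArith ClassicalEpsilon.
Open Scope R_scope.

Lemma div_le_div A B C D : 0 < B -> 0 < D -> A * D <= C * B -> A / B <= C / D.
Proof.
  intros HB HD H.
  assert (E : A/B - C/D = (A*D - C*B) * /(B*D)) by (field; lra).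
  assert (0 < /(B*D)) by (apply Rinv_0_lt_compat; nra). nra.
Qed.

Lemma exp_inv_prod x : exp x * exp (- x) = 1.
Proof. rewrite <- exp_plus. replace (x + - x) with 0 by ring. apply exp_0. Qed.

Lemma sinh_small x : 0 <= x <= 1/2 -> sinh x <= 3/2 * x.
Proof.
  intros Hx. unfold sinh.
  pose proof (exp_inv_prod x). pose proof (exp_ineq1_le (- x)). pose proof (exp_pos x).
  pose proof (exp_pos (-x)).
  assert (exp x <= 1 + 2 * x) by nra. lra.
Qed.

Lemma sinh_ge_half x : 0 <= x -> x / 2 <= sinh x.
Proof.
  intros Hx. unfold sinh.
  pose proof (exp_inv_prod x). pose proof (exp_ineq1_le x). pose proof (exp_pos x).
  pose proof (exp_pos (-x)).
  assert (exp (-x) <= 1) by nra. lra.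
Qed.

Lemma sinh_le x y : x <= y -> sinh x <= sinh y.
Proof. intros [H|H]; [left; apply sinh_lt; auto | subst; lra]. Qed.

Lemma f_bounds s a : 0 < s -> -1 <= a <= 1 ->
  0 < cosh s - a /\
  s / (s + 2) <= sinh s / (cosh s - a) <= (s + 2) / s.
Proof.
  intros Hs Ha. unfold sinh, cosh.
  pose proof (exp_inv_prod s) as P. pose proof (exp_ineq1_le s). pose proof (exp_pos s).
  pose proof (exp_pos (-s)).
  set (E := exp s) in *. set (F := exp (-s)) in *.
  assert (HD : 0 < (E + F)/2 - a).
  { assert (E*(E + F - 2) = (E-1)^2) by nra. assert (0 < (E-1)^2) by nra. nra. }
  split; [exact HD|split].
  - apply div_le_div; try lra.
    assert (E*((E+F)/2 - a) <= (E+1)^2/2) by nra.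
    assert (E*((E-F)/2) = (E-1)*(E+1)/2) by nra.
    assert (s*(E+1) <= (s+2)*(E-1)) by nra.
    assert (E*(s * ((E + F) / 2 - a)) <= E*((E - F) / 2 * (s + 2))) by nra.
    nra.
  - apply div_le_div; try lra.
    assert (E*((E+F)/2 - a) >= (E-1)^2/2) by nra.
    assert (E*((E-F)/2) = (E-1)*(E+1)/2) by nra.
    assert (s*(E+1) <= (s+2)*(E-1)) by nra.
    assert (E*((E - F) / 2 * s) <= E*((s + 2) * ((E + F) / 2 - a))) by nra.
    nra.
Qed.

Lemma Rabs_sin_le x : Rabs (sin x) <= Rabs x.
Proof.
  destruct (Rtotal_order x 0) as [H|[H|H]].
  - replace (sin x) with (- sin (-x)) by (rewrite sin_neg; ring).
    rewrite Rabs_Ropp. replace (Rabs x) with (Rabs (-x)) by apply Rabs_Ropp.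
    pose proof (sin_lt_x (-x) ltac:(lra)).
    destruct (Rle_dec (-x) PI).
    + assert (0 <= sin (-x)) by (apply sin_ge_0; lra). rewrite !Rabs_right; lra.
    + pose proof (SIN_bound (-x)). pose proof PI2_1. rewrite (Rabs_right (-x)) by lra.
      apply Rabs_le; lra.
  - subst. rewrite sin_0. lra.
  - pose proof (sin_lt_x x H).
    destruct (Rle_dec x PI).
    + assert (0 <= sin x) by (apply sin_ge_0; lra). rewrite !Rabs_right; lra.
    + pose proof (SIN_bound x). pose proof PI2_1. rewrite (Rabs_right x) by lra.
      apply Rabs_le; lra.
Qed.

Lemma cos_lip x y : Rabs (cos x - cos y) <= Rabs (x - y).
Proof.
  rewrite form2. rewrite !Rabs_mult.
  pose proof (Rabs_sin_le ((x - y)/2)). pose proof (SIN_bound ((x+y)/2)).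
  assert (Rabs (sin ((x + y) / 2)) <= 1) by (apply Rabs_le; lra).
  assert (Rabs ((x - y)/2) = Rabs (x-y) / 2).
  { unfold Rdiv. rewrite Rabs_mult. rewrite (Rabs_right (/2)) by lra. ring. }
  rewrite Rabs_left by lra.
  pose proof (Rabs_pos (sin ((x - y) / 2))). pose proof (Rabs_pos (sin ((x + y) / 2))).
  nra.
Qed.

Lemma cont_sinh_lin L : continuity (fun x => sinh (x * L)).
Proof.
  apply (continuity_comp (fun x => x * L) sinh).
  - reg.
  - apply derivable_continuous, derivable_sinh.
Qed.
Lemma cont_cosh_lin L : continuity (fun x => cosh (x * L)).
Proof.
  apply (continuity_comp (fun x => x * L) cosh).
  - reg.
  - apply derivable_continuous, derivable_cosh.
Qed.

Lemma xi_exists U L c a : 0 < U -> 18 < U * L -> 2 <= L -> -1 <= c < 0 -> -1 <= a <= 1 ->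
  exists xi, 0 < xi /\ c * sinh xi = - (U / 4) * (sinh (xi * L) / (cosh (xi * L) - a)).
Proof.
  intros HU HUL HL Hc Ha.
  set (G := fun x => - (c * sinh x * (cosh (x * L) - a) + U / 4 * sinh (x * L))).
  assert (HG : continuity G).
  { unfold G. apply continuity_opp. apply continuity_plus.
    - apply continuity_mult. apply continuity_mult. apply continuity_const. intros ? ?; auto.
      apply derivable_continuous, derivable_sinh.
      apply continuity_minus. apply cont_cosh_lin. apply continuity_const. intros ? ?; auto.
    - apply continuity_mult. apply continuity_const. intros ? ?; auto. apply cont_sinh_lin. }
  set (x1 := 1 / L). set (x2 := 1 + 3 * U / (- c)).
  assert (Hx1 : 0 < x1 <= 1/2).
  { unfold x1. split. apply Rdiv_lt_0_compat; lra. apply div_le_div; lra. }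
  assert (Hx2 : 1 <= x2).
  { unfold x2. assert (0 < 3 * U / (-c)) by (apply Rdiv_lt_0_compat; lra). lra. }
  assert (G1 : G x1 < 0).
  { unfold G. assert (E : x1 * L = 1) by (unfold x1; field; lra). rewrite E.
    destruct (f_bounds 1 a ltac:(lra) Ha) as [HD [Hf1 Hf2]].
    pose proof (sinh_small x1 ltac:(lra)). pose proof (sinh_ge_half x1 ltac:(lra)).
    set (D := cosh 1 - a) in *. set (f := sinh 1 / D) in *.
    assert (Ef : sinh 1 = f * D) by (unfold f; field; lra).
    rewrite Ef.
    assert (x1 * L = 1) by exact E.
    assert (c * sinh x1 >= - (3/2) * x1) by nra.
    assert (U / 4 * f >= U / 12) by (replace (1/(1+2)) with (1/3) in Hf1 by field; nra).
    assert ((3/2) * x1 < U / 12) by nra.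
    nra. }
  assert (G2 : 0 < G x2).
  { unfold G.
    destruct (f_bounds (x2 * L) a ltac:(nra) Ha) as [HD [Hf1 Hf2]].
    pose proof (sinh_ge_half x2 ltac:(lra)).
    set (D := cosh (x2 * L) - a) in *. set (f := sinh (x2 * L) / D) in *.
    assert (Ef : sinh (x2 * L) = f * D) by (unfold f; field; lra).
    rewrite Ef.
    assert (f <= 2).
    { eapply Rle_trans; [exact Hf2|]. apply (Rmult_le_reg_r (x2 * L)); [nra|].
      unfold Rdiv. rewrite Rmult_assoc, Rinv_l by nra. nra. }
    assert (c * sinh x2 <= c * (x2 / 2)) by nra.
    assert (c * (x2 / 2) = c / 2 - 3 * U / 2) by (unfold x2; field; lra).
    assert (c * sinh x2 + U / 4 * f < 0) by nra.
    nra. }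
  destruct (IVT G x1 x2 HG ltac:(lra) G1 G2) as [z [Hz Hz0]].
  exists z. split; [lra|].
  destruct (f_bounds (z * L) a ltac:(nra) Ha) as [HD _].
  unfold G in Hz0.
  apply (Rmult_eq_reg_r (cosh (z * L) - a)); [|lra].
  field_simplify; [lra|lra].
Qed.

Lemma xi_core U L c a xi : 0 < U -> 24 <= U * L -> 0 < L -> -1 <= c < 0 -> -1 <= a <= 1 -> 0 < xi ->
  c * sinh xi = - (U / 4) * (sinh (xi * L) / (cosh (xi * L) - a)) ->
  Rmin (1/2) (U/12) <= xi /\
  exists f, sinh xi * (- c) = U / 4 * f /\ Rabs (f - 1) <= 2 / (xi * L).
Proof.
  intros HU HUL HL Hc Ha Hxi Heq.
  set (s := xi * L) in *.
  assert (Hs : 0 < s) by (unfold s; nra).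
  destruct (f_bounds s a Hs Ha) as [HD [Hf1 Hf2]].
  set (f := sinh s / (cosh s - a)) in *.
  assert (F1 : s <= f * (s + 2)).
  { assert (s / (s+2) * (s+2) = s) by (field; lra). nra. }
  assert (F2 : f * s <= s + 2).
  { assert ((s+2) / s * s = s + 2) by (field; lra). nra. }
  assert (Hsf : sinh xi * (- c) = U / 4 * f) by lra.
  split.
  - destruct (Rle_dec (Rmin (1/2) (U/12)) xi) as [?|Hn]; [assumption|exfalso].
    apply Rnot_le_lt in Hn.
    assert (xi < 1/2) by (eapply Rlt_le_trans; [exact Hn| apply Rmin_l]).
    assert (xi < U/12) by (eapply Rlt_le_trans; [exact Hn| apply Rmin_r]).
    pose proof (sinh_small xi ltac:(lra)).
    pose proof (sinh_ge_half xi ltac:(lra)).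
    assert (U / 4 * f <= sinh xi) by nra.
    assert (0 <= f) by nra.
    assert (U / 4 * s <= U / 4 * f * (s + 2)) by nra.
    assert (U / 4 * s <= 3/2 * xi * (s + 2)) by nra.
    unfold s in *. nra.
  - exists f. split; [exact Hsf|].
    apply Rabs_le. split.
    + assert (2 / s * s = 2) by (field; lra).
      assert (0 < 2 / s) by (apply Rdiv_lt_0_compat; lra). nra.
    + assert (2 / s * s = 2) by (field; lra). nra.
Qed.
Lemma Rabs_le_inv x y : Rabs x <= y -> -y <= x <= y.
Proof. unfold Rabs; destruct Rcase_abs; lra. Qed.

Lemma shift_PI n u : cos (INR n * PI + u) = (-1)^n * cos u /\ sin (INR n * PI + u) = (-1)^n * sin u.
Proof.
  induction n as [|n [IHc IHs]].
  - simpl. rewrite Rmult_0_l, Rplus_0_l. lra.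
  - rewrite S_INR. replace ((INR n + 1) * PI + u) with ((INR n * PI + u) + PI) by ring.
    rewrite neg_cos, neg_sin, IHc, IHs. simpl. lra.
Qed.

Lemma cos_half_ge t : 0 <= t <= 1 -> 1/2 <= cos t.
Proof.
  intros Ht. replace t with (2 * (t/2)) by field. rewrite cos_2a_sin.
  pose proof (sin_lt_x (t/2)). destruct (Req_dec t 0).
  - subst. replace (0/2) with 0 by field. rewrite sin_0. lra.
  - assert (0 <= sin (t/2)) by (apply sin_ge_0; pose proof PI2_1; lra).
    assert (sin (t/2) < t/2) by (apply sin_lt_x; lra). nra.
Qed.

Lemma q_exists U L l Lam : 0 < U -> 0 < INR L -> (1 <= l)%nat -> exists k, is_q U L l Lam k.
Proof.
  intros HU HL Hl.
  set (n := (l - 1)%nat).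
  assert (Hn : INR n = INR l - 1) by (unfold n; rewrite minus_INR by exact Hl; simpl; ring).
  set (al := (INR l - 1) * (2 * PI / INR L)).
  set (M := 1 + Rabs Lam).
  assert (HM : 1 <= M) by (unfold M; pose proof (Rabs_pos Lam); lra).
  set (t := Rmin 1 (U / (16 * M))).
  assert (Ht0 : 0 < t).
  { unfold t. apply Rmin_pos; [lra|]. apply Rdiv_lt_0_compat; lra. }
  assert (Ht1 : t <= 1) by apply Rmin_l.
  assert (HtM : t * M <= U / 16).
  { assert (t <= U / (16*M)) by apply Rmin_r.
    assert (U/(16*M) * M = U/16) by (field; lra). nra. }
  set (H := fun u => (sin (al + 2 * u / INR L) - Lam) * sin u - U / 4 * cos u).
  assert (Hc : continuity H) by (unfold H; reg).
  assert (HPI := PI2_1).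
  assert (Hbound : forall u, Rabs (sin (al + 2 * u / INR L) - Lam) <= M).
  { intros u. unfold M. eapply Rle_trans; [apply Rabs_triang|]. rewrite Rabs_Ropp.
    pose proof (SIN_bound (al + 2 * u / INR L)). assert (Rabs (sin (al + 2 * u / INR L)) <= 1) by (apply Rabs_le; lra). lra. }
  assert (Hsint : 0 < sin t) by (apply sin_gt_0; lra).
  assert (Hsint2 : sin t < t) by (apply sin_lt_x; lra).
  assert (Hcost : 1/2 <= cos t) by (apply cos_half_ge; lra).
  assert (H1 : H t < 0).
  { unfold H. pose proof (Hbound t) as B. apply Rabs_le_inv in B. nra. }
  assert (H2 : 0 < H (PI - t)).
  { unfold H. rewrite sin_PI_x, Rtrigo_facts.cos_pi_minus.
    pose proof (Hbound (PI - t)) as B. apply Rabs_le_inv in B. nra. }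
  destruct (IVT H t (PI - t) Hc ltac:(lra) H1 H2) as [z [Hz Hz0]].
  assert (Hsz : 0 < sin z) by (apply sin_gt_0; lra).
  exists (al + 2 * z / INR L). unfold is_q. split.
  - assert (0 < 2 * z / INR L) by (apply Rdiv_lt_0_compat; lra).
    assert (2 * z / INR L < 2 * PI / INR L) by (apply Rmult_lt_compat_r; [apply Rinv_0_lt_compat; lra | lra]).
    unfold al. lra.
  - assert (E : (al + 2 * z / INR L) * INR L / 2 = INR n * PI + z) by (unfold al; rewrite Hn; field; lra).
    rewrite E. unfold cotR. destruct (shift_PI n z) as [E1 E2]. rewrite E1, E2.
    assert ((-1)^n <> 0) by (apply pow_nonzero; lra).
    unfold H in Hz0.
    replace ((-1) ^ n * cos z / ((-1) ^ n * sin z)) with (cos z / sin z) by (field; lra).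
    apply (Rmult_eq_reg_r (sin z)); [|lra]. field_simplify; lra.
Qed.

Lemma final_est U C x f e1 e2 : 0 < U -> 0 < C -> Rabs (f - 1) <= e1 -> Rabs (x - C) <= e2 -> e2 <= C / 2 ->
  Rabs (U / 4 * f / x - U / (4 * C)) <= U / (2 * C ^ 2) * (C * e1 + e2).
Proof.
  intros HU HC Hf Hx He.
  apply Rabs_le_inv in Hx.
  assert (Hxp : C / 2 <= x) by lra.
  assert (E : U / 4 * f / x - U / (4 * C) = (U / 4) * ((f - 1) * C + (C - x)) * / (x * C)) by (field; lra).
  rewrite E, !Rabs_mult.
  rewrite (Rabs_right (U/4)) by lra. rewrite (Rabs_right (/ (x * C))) by (left; apply Rinv_0_lt_compat; nra).
  assert (Rabs ((f - 1) * C + (C - x)) <= C * e1 + e2).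
  { eapply Rle_trans; [apply Rabs_triang|]. rewrite Rabs_mult, (Rabs_right C) by lra.
    assert (Rabs (C - x) <= e2) by (apply Rabs_le; lra). nra. }
  assert (/ (x * C) <= 2 / C ^ 2).
  { replace (2 / C ^ 2) with (/ (C / 2 * C)) by (field; lra).
    apply Rinv_le_contravar; nra. }
  assert (0 <= / (x * C)) by (left; apply Rinv_0_lt_compat; nra).
  pose proof (Rabs_pos ((f - 1) * C + (C - x))).
  replace (U / (2 * C ^ 2) * (C * e1 + e2)) with (U / 4 * (C * e1 + e2) * (2 / C ^ 2)) by (field; lra).
  apply Rmult_le_compat; try nra.
Qed.

Lemma Rabs_powerRZ_m1 z : Rabs (powerRZ (-1) z) = 1.
Proof.
  destruct z; simpl.
  - apply Rabs_R1.
  - apply pow_1_abs.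
  - rewrite Rabs_inv, pow_1_abs. apply Rinv_1.
Qed.

Lemma sinh_opp x : sinh (- x) = - sinh x.
Proof. unfold sinh. rewrite Ropp_involutive. field. Qed.

Theorem mainTheorem6 (U : R) (ell : nat -> nat) (m : nat -> Z) (q : R) :
  0 < U ->
  (forall L : nat, 8 / U < INR L ->
     (1 <= ell L <= L)%nat /\
     INR L / 2 <= IZR (m L) - INR (ell L) <= 3 * INR L / 2 - 1) ->
  (forall eps : R, 0 < eps -> exists N : nat, forall L : nat,
     (N <= L)%nat -> 8 / U < INR L ->
     Rabs ((IZR (m L) - INR (ell L)) * PI / INR L - q) < eps) ->
  PI / 2 < q < 3 * PI / 2 ->
  forall eps : R, 0 < eps -> exists N : nat, forall L : nat,
    (N <= L)%nat -> 8 / U < INR L ->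
    forall Lam : R,
      Rabs (xi_sol U L (ell L) (m L) Lam - (- arcsinh (U / (4 * cos q)))) < eps.
Proof.
  intros HU Hb Hconv Hq eps Heps.
  set (C := - cos q).
  assert (HC : 0 < C) by (unfold C; pose proof (cos_lt_0 q ltac:(lra) ltac:(lra)); lra).
  assert (HC1 : C <= 1) by (unfold C; pose proof (COS_bound q); lra).
  set (T := U / (4 * C)).
  set (xs := - arcsinh (U / (4 * cos q))).
  assert (HT : sinh xs = T).
  { assert (cos q <> 0) by (unfold C in HC; lra). unfold xs. rewrite sinh_opp, sinh_arcsinh. unfold T, C. field. auto. }
  set (eta := Rmin (sinh (xs + eps) - T) (T - sinh (xs - eps))).
  assert (Heta : 0 < eta).
  { unfold eta. apply Rmin_pos.
    - pose proof (sinh_lt xs (xs + eps) ltac:(lra)). lra.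
    - pose proof (sinh_lt (xs - eps) xs ltac:(lra)). lra. }
  set (rho := eta * C ^ 2 / U).
  assert (Hrho : 0 < rho) by (unfold rho; apply Rdiv_lt_0_compat; [apply Rmult_lt_0_compat; [lra| apply pow_lt; lra]|lra]).
  set (del := Rmin (1/2) (U/12)).
  assert (Hdel : 0 < del) by (unfold del; apply Rmin_pos; lra).
  set (e1 := Rmin (rho / 4) (C / 4)).
  assert (He1 : 0 < e1) by (unfold e1; apply Rmin_pos; lra).
  assert (He1a : e1 <= rho / 4) by apply Rmin_l.
  assert (He1b : e1 <= C / 4) by apply Rmin_r.
  destruct (Hconv e1 He1) as [N1 HN1].
  set (K := 24 / U + 2 + PI / e1 + 4 * C / (rho * del)).
  destruct (INR_unbounded K) as [N2 HN2].
  exists (Nat.max N1 N2).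
  intros L HNL HUL Lam.
  assert (HLK : K < INR L).
  { apply le_INR in HNL. pose proof (le_INR _ _ (Nat.le_max_r N1 N2)). lra. }
  assert (P1 : 0 < 24 / U) by (apply Rdiv_lt_0_compat; lra).
  assert (P2 : 0 < PI / e1) by (apply Rdiv_lt_0_compat; [apply PI_RGT_0|lra]).
  assert (P3 : 0 < 4 * C / (rho * del)) by (apply Rdiv_lt_0_compat; nra).
  assert (HL0 : 0 < INR L) by (unfold K in HLK; lra).
  assert (HL2 : 2 <= INR L) by (unfold K in HLK; lra).
  assert (HUL24 : 24 <= U * INR L).
  { assert (24 / U * U = 24) by (field; lra). unfold K in HLK. nra. }
  assert (HPIL : PI / INR L <= e1).
  { assert (PI / e1 * e1 = PI) by (field; lra).
    assert (PI / INR L * INR L = PI) by (field; lra). unfold K in HLK.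
    assert (PI < e1 * INR L) by nra. nra. }
  assert (HdelL : 2 * C / (del * INR L) <= rho / 2).
  { assert (4 * C / (rho * del) * (rho * del) = 4 * C) by (field; nra).
    assert (2 * C / (del * INR L) * (del * INR L) = 2 * C) by (field; nra).
    unfold K in HLK.
    assert (4 * C <= INR L * (rho * del)) by nra.
    assert (0 < del * INR L) by nra.
    nra. }
  destruct (Hb L HUL) as [[Hl1 _] _].
  set (l := ell L) in *. set (M := m L) in *.
  set (qs := q_sol U L l Lam).
  assert (Hqs : is_q U L l Lam qs).
  { unfold qs, q_sol. apply epsilon_spec. apply q_exists; auto. }
  destruct Hqs as [[Hqs1 Hqs2] _].
  set (p := (IZR M - INR l) * PI / INR L).
  set (arg := IZR M * PI / INR L - qs / 2).
  assert (Harg : 0 < arg - p < PI / INR L).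
  { assert (E1 : (INR l - 1) * (2 * PI / INR L) = 2 * (INR l * PI / INR L) - 2 * (PI / INR L)) by (field; lra).
    assert (E2 : INR l * (2 * PI / INR L) = 2 * (INR l * PI / INR L)) by (field; lra).
    assert (E3 : arg - p = INR l * PI / INR L - qs / 2) by (unfold arg, p; field; lra).
    rewrite E3. lra. }
  assert (Hp : Rabs (p - q) < e1).
  { apply HN1; [|exact HUL]. apply Nat.le_trans with (Nat.max N1 N2); [apply Nat.le_max_l|exact HNL]. }
  set (c := cos arg).
  assert (Hcq : Rabs (c - cos q) < 2 * e1).
  { eapply Rle_lt_trans; [apply cos_lip|].
    replace (arg - q) with ((arg - p) + (p - q)) by ring.
    eapply Rle_lt_trans; [apply Rabs_triang|].
    rewrite (Rabs_right (arg - p)) by lra. lra. }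
  pose proof (Rabs_le_inv _ _ (Rlt_le _ _ Hcq)) as Hcq'.
  assert (Hc : -1 <= c < 0) by (pose proof (COS_bound arg) as B; fold c in B; unfold C in *; lra).
  set (a := powerRZ (-1) M * cos (qs * INR L / 2)).
  assert (Ha : -1 <= a <= 1).
  { apply Rabs_le_inv. unfold a. rewrite Rabs_mult, Rabs_powerRZ_m1, Rmult_1_l.
    pose proof (COS_bound (qs * INR L / 2)). apply Rabs_le; lra. }
  set (xi := xi_sol U L l M Lam).
  assert (Hxi : is_xi U L l M Lam xi).
  { unfold xi, xi_sol. apply epsilon_spec.
    destruct (xi_exists U (INR L) c a HU ltac:(lra) HL2 Hc Ha) as [z [Hz1 Hz2]].
    exists z. split; [exact Hz1|]. exact Hz2. }
  destruct Hxi as [Hxi0 Hxieq].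
  fold qs in Hxieq. fold arg c a in Hxieq.
  destruct (xi_core U (INR L) c a xi HU HUL24 HL0 Hc Ha Hxi0 Hxieq) as [Hdx [f [Hf1 Hf2]]].
  fold del in Hdx.
  assert (Hsx : sinh xi = U / 4 * f / (- c)) by (rewrite <- Hf1; field; lra).
  assert (He1' : Rabs (f - 1) <= 2 / (del * INR L)).
  { eapply Rle_trans; [exact Hf2|]. apply div_le_div; nra. }
  assert (Hxc : Rabs (- c - C) <= Rabs (c - cos q)).
  { unfold C. replace (- c - - cos q) with (- (c - cos q)) by ring. rewrite Rabs_Ropp. lra. }
  pose proof (final_est U C (- c) f (2 / (del * INR L)) (Rabs (c - cos q)) HU HC He1' Hxc ltac:(lra)) as Hfin.
  rewrite <- Hsx in Hfin. fold T in Hfin.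
  assert (Hbd : Rabs (sinh xi - T) < eta).
  { eapply Rle_lt_trans; [exact Hfin|].
    assert (C * (2 / (del * INR L)) + Rabs (c - cos q) < rho).
    { replace (C * (2 / (del * INR L))) with (2 * C / (del * INR L)) by (field; nra). lra. }
    assert (U / (2 * C ^ 2) * rho = eta / 2) by (unfold rho; field; lra).
    assert (0 < U / (2 * C ^ 2)) by (apply Rdiv_lt_0_compat; nra).
    nra. }
  apply Rabs_def2 in Hbd.
  assert (Hm1 : eta <= sinh (xs + eps) - T) by apply Rmin_l.
  assert (Hm2 : eta <= T - sinh (xs - eps)) by apply Rmin_r.
  assert (xi < xs + eps).
  { destruct (Rlt_le_dec xi (xs + eps)) as [?|Hge]; [assumption|].
    pose proof (sinh_le _ _ Hge). lra. }
  assert (xs - eps < xi).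
  { destruct (Rlt_le_dec (xs - eps) xi) as [?|Hge]; [assumption|].
    pose proof (sinh_le _ _ Hge). lra. }
  fold xi. fold xs. apply Rabs_def1; lra.
Qed.
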